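(* Let $(\mathcal A_1,U,\varphi_1),\dots,(\mathcal A_m,U,\varphi_m)$ be symmetric qualitative formalisms over the same set $U$, and let $\mathfrak R'\subseteq U\times U$ be symmetric ($\mathfrak R'=\mathfrak R'^{-1}$). For each distinct $i,j\in\{1,\dots,m\}$ let $\Rsh_i^j$ be a projection operator from $\mathcal A_i$ to $\mathcal A_j$ such that $\varphi_i(b)\cap\varphi_j(\mathcal B_j)\cap\mathfrak R'\subseteq\varphi_j(\Rsh_i^jb)$ for every atom $b$ of $\mathcal A_i$. Let $\mathcal A$ be the multi-algebra $\mathcal A_1\times\cdots\times\mathcal A_m$ equipped with the projections $\Rsh_i^j$, and let $\varphi:\mathcal A\to2^{U\times U}$ be defined by $\varphi(R)=\bigcap_{i=1}^m\varphi_i(R_i)\cap\mathfrak R'$. Then $(\mathcal A,U,\varphi)$ is a sequential formalism.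
   Context: A finite non-associative algebra is a tuple $(\mathcal A,\cup,\neg,\emptyset,\mathcal B,\diamond,\overline{\cdot},e)$ where $(\mathcal A,\cup,\neg,\emptyset,\mathcal B)$ is a finite Boolean algebra (with $x\cap y=\neg(\neg x\cup\neg y)$) and for all $x,y,z$: $\overline{\overline x}=x$, $\overline{x\cup y}=\overline x\cup\overline y$, $\overline{x\diamond y}=\overline y\diamond\overline x$, $e\diamond x=x\diamond e=x$, $x\diamond(y\cup z)=(x\diamond y)\cup(x\diamond z)$, $(x\diamond y)\cap\overline z=\emptyset\iff(y\diamond z)\cap\overline x=\emptyset$. $\mathcal B$ is the universal relation; $r\subseteq r'$ means $r\cup r'=r'$; atoms are the basic relations. A symmetric qualitative formalism is a triple $(\mathcal A,U,\varphi)$ with $\mathcal A$ a finite non-associative algebra, $U\neq\emptyset$ and $\varphi:\mathcal A\to2^{U\times U}$ with $\varphi(\emptyset)=\emptyset$, $\varphi(\overline r)=\varphi(r)^{-1}$, $\varphi(r\cap r')=\varphi(r)\cap\varphi(r')$, $\varphi(r\cup r')=\varphi(r)\cup\varphi(r')$, $\varphi(r\diamond r')\supseteq(\varphi(r)\circ\varphi(r'))\cap\varphi(\mathcal B)$ ($\circ$ composition of binary relations, $^{-1}$ converse). A projection operator from $\mathcal A$ to $\mathcal A'$ is a map $\Rsh$ with $\Rsh(r\cup r')=\Rsh r\cup\Rsh r'$ and $\Rsh\overline r=\overline{\Rsh r}$. A finite multi-algebra is a product $\mathcal A_1\times\cdots\times\mathcal A_m$ of finite non-associative algebras with projection operators $\Rsh_i^j:\mathcal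 A_i\to\mathcal A_j$ for all distinct $i,j$. Relations $R=(R_1,\dots,R_m)$; $R$ basic if all $R_i$ are atoms; universal relation $\mathcal B=(\mathcal B_1,\dots,\mathcal B_m)$; $\diamond,\cap,\cup,\overline{\cdot}$ and $\subseteq$ componentwise; $B\in R$ means $B$ basic with $B\subseteq R$. The projection closure $\Rsh R$ is obtained by repeatedly replacing $R_j$ by $R_j\cap\Rsh_i^jR_i$ (distinct $i,j$) until a fixed point. A sequential formalism is $(\mathcal A,U,\varphi)$ with $\mathcal A$ a finite multi-algebra, $U\ne\emptyset$, $\varphi:\mathcal A\to 2^{U\times U}$ satisfying for all $R,R'$: $\varphi(\Rsh R)=\varphi(R)$, $\varphi(\overline R)=\varphi(R)^{-1}$, $\varphi((\emptyset,\dots,\emptyset))=\emptyset$, $\varphi(R\diamond R')\supseteq(\varphi(R)\circ\varphi(R'))\cap\varphi(\mathcal B)$, $\varphi(R\cap R')=\varphi(R)\cap\varphi(R')$, $\varphi(R)=\bigcup_{B\in R}\varphi(B)$. *)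

(* Defs.v *)
From mathcomp Require Import all_boot.
From Stdlib Require Import Relation_Operators.

Set Implicit Arguments.
Unset Strict Implicit.
Unset Printing Implicit Defensive.

Record nalg := NAlg {
  car  : finType;
  cup  : car -> car -> car;
  neg  : car -> car;
  emp  : car;
  univ : car;                         (* the universal relation B *)
  comp : car -> car -> car;
  conv : car -> car;
  eid  : car
}.
Arguments cup : clear implicits.
Arguments neg : clear implicits.
Arguments emp : clear implicits.
Arguments univ : clear implicits.
Arguments comp : clear implicits.
Arguments conv : clear implicits.
Arguments eid : clear implicits.

Definition cap (A : nalg) (x y : car A) : car A :=
  neg A (cup A (neg A x) (neg A y)).
Arguments cap : clear implicits.

Definition sub (A : nalg) (x y : car A) : Prop := cup A x y = y.

Definition is_boolean_algebra (A : nalg) : Prop :=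
  (forall x y, cup A x y = cup A y x) /\
  (forall x y, cap A x y = cap A y x) /\
  (forall x y z, cup A x (cup A y z) = cup A (cup A x y) z) /\
  (forall x y z, cap A x (cap A y z) = cap A (cap A x y) z) /\
  (forall x y, cup A x (cap A x y) = x) /\
  (forall x y, cap A x (cup A x y) = x) /\
  (forall x y z, cup A x (cap A y z) = cap A (cup A x y) (cup A x z)) /\
  (forall x y z, cap A x (cup A y z) = cup A (cap A x y) (cap A x z)) /\
  (forall x, cup A x (emp A) = x) /\
  (forall x, cap A x (univ A) = x) /\
  (forall x, cup A x (neg A x) = univ A) /\
  (forall x, cap A x (neg A x) = emp A).

Definition is_nalg (A : nalg) : Prop :=
  is_boolean_algebra A /\
  (forall x, conv A (conv A x) = x) /\
  (forall x y, conv A (cup A x y) = cup A (conv A x) (conv A y)) /\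
  (forall x y, conv A (comp A x y) = comp A (conv A y) (conv A x)) /\
  (forall x, comp A (eid A) x = x) /\
  (forall x, comp A x (eid A) = x) /\
  (forall x y z, comp A x (cup A y z) = cup A (comp A x y) (comp A x z)) /\
  (forall x y z, cap A (comp A x y) (conv A z) = emp A <->
                 cap A (comp A y z) (conv A x) = emp A).

Definition atom (A : nalg) (b : car A) : Prop :=
  b <> emp A /\ forall x, sub x b -> x = emp A \/ x = b.

Definition brel (U : Type) := U -> U -> Prop.
Definition rsub U (r s : brel U) : Prop := forall x y, r x y -> s x y.
Definition req U (r s : brel U) : Prop := forall x y, r x y <-> s x y.
Definition rcap U (r s : brel U) : brel U := fun x y => r x y /\ s x y.
Definition rcup U (r s : brel U) : brel U := fun x y => r x y \/ s x y.
Definition rinv U (r : brel U) : brel U := fun x y => r y x.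
Definition rcomp U (r s : brel U) : brel U := fun x z => exists y, r x y /\ s y z.
Definition rempty U : brel U := fun _ _ => False.

Definition sym_qual_formalism (A : nalg) (U : Type) (phi : car A -> brel U) : Prop :=
  is_nalg A /\ inhabited U /\
  req (phi (emp A)) (@rempty U) /\
  (forall r, req (phi (conv A r)) (rinv (phi r))) /\
  (forall r r', req (phi (cap A r r')) (rcap (phi r) (phi r'))) /\
  (forall r r', req (phi (cup A r r')) (rcup (phi r) (phi r'))) /\
  (forall r r', rsub (rcap (rcomp (phi r) (phi r')) (phi (univ A)))
                     (phi (comp A r r'))).

Definition projection_operator (A A' : nalg) (P : car A -> car A') : Prop :=
  (forall r r', P (cup A r r') = cup A' (P r) (P r')) /\
  (forall r, P (conv A r) = conv A' (P r)).

Section Multi.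
Variables (m : nat) (A : 'I_m -> nalg).

Definition mrel := forall i : 'I_m, car (A i).

Definition mcomp (R R' : mrel) : mrel := fun i => comp (A i) (R i) (R' i).
Definition mcap  (R R' : mrel) : mrel := fun i => cap (A i) (R i) (R' i).
Definition mcup  (R R' : mrel) : mrel := fun i => cup (A i) (R i) (R' i).
Definition mconv (R : mrel) : mrel := fun i => conv (A i) (R i).
Definition muniv : mrel := fun i => univ (A i).
Definition mempty : mrel := fun i => emp (A i).
Definition msub (R R' : mrel) : Prop := forall i, sub (R i) (R' i).
Definition mbasic (R : mrel) : Prop := forall i, atom (R i).

Variable P : forall i j : 'I_m, car (A i) -> car (A j).

Definition proj_step (R R' : mrel) : Prop :=
  exists i j : 'I_m, i <> j /\
    R' j = cap (A j) (R j) (@P i j (R i)) /\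
    (forall k, k <> j -> R' k = R k).

Definition proj_fixed (R : mrel) : Prop :=
  forall i j : 'I_m, i <> j -> cap (A j) (R j) (@P i j (R i)) = R j.

Definition proj_closure (R R' : mrel) : Prop :=
  clos_refl_trans mrel proj_step R R' /\ proj_fixed R'.

Definition sequential_formalism (U : Type) (phi : mrel -> brel U) : Prop :=
  (forall i, is_nalg (A i)) /\
  (forall i j : 'I_m, i <> j -> projection_operator (@P i j)) /\
  inhabited U /\
  (forall R R', proj_closure R R' -> req (phi R') (phi R)) /\
  (forall R, req (phi (mconv R)) (rinv (phi R))) /\
  req (phi mempty) (@rempty U) /\
  (forall R R', rsub (rcap (rcomp (phi R) (phi R')) (phi muniv)) (phi (mcomp R R'))) /\
  (forall R R', req (phi (mcap R R')) (rcap (phi R) (phi R'))) /\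
  (forall R, req (phi R) (fun x y => exists B, mbasic B /\ msub B R /\ phi B x y)).

End Multi.

Definition product_interp (m : nat) (A : 'I_m -> nalg) (U : Type)
  (phis : forall i, car (A i) -> brel U) (Rp : brel U) : mrel A -> brel U :=
  fun R x y => (forall i, phis i (R i) x y) /\ Rp x y.

(* Main.v *)
Require Import Defs.
From mathcomp Require Import all_boot.
From Stdlib Require Import Classical ClassicalEpsilon Relation_Operators.

Set Implicit Arguments.
Unset Strict Implicit.

Section BA.
Variable A : nalg.
Hypothesis HA : is_boolean_algebra A.

Lemma ba_cupid x : cup A x x = x.
Proof.
case: HA => _ [_ [_ [_ [abs1 [abs2 _]]]]].
by rewrite -{2}(abs2 x x) abs1.
Qed.

Lemma ba_sub_trans (x y z : car A) : Defs.sub x y -> Defs.sub y z -> Defs.sub x z.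
Proof.
case: HA => _ [_ [assoc _]].
rewrite /Defs.sub => h1 h2. by rewrite -h2 assoc h1.
Qed.

Lemma ba_antisym (x y : car A) : Defs.sub x y -> Defs.sub y x -> x = y.
Proof.
case: HA => cupC _. rewrite /Defs.sub => h1 h2. by rewrite -h1 cupC h2.
Qed.

Lemma ba_sub_capl (x y : car A) : Defs.sub (cap A x y) x.
Proof.
case: HA => cupC [_ [_ [_ [abs1 _]]]]. by rewrite /Defs.sub cupC abs1.
Qed.

Lemma ba_split (x z : car A) : Defs.sub z x -> x = cup A z (cap A x (neg A z)).
Proof.
case: HA => cupC [capC [_ [_ [_ [_ [dist1 [_ [_ [capU [cmpl _]]]]]]]]]].
rewrite /Defs.sub => h. by rewrite dist1 h cmpl capU.
Qed.

Lemma ba_cap_sub (z x : car A) : Defs.sub z x -> cap A z x = z.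
Proof.
case: HA => _ [_ [_ [_ [_ [abs2 _]]]]]. rewrite /Defs.sub => h.
by rewrite -{1}h abs2.
Qed.

Lemma ba_noncomp (x z : car A) : Defs.sub z x -> cap A x (neg A z) = x -> z = emp A.
Proof.
move=> h e.
case: HA => _ [capC [_ [capA _]]].
case: HA => _ [_ [_ [_ [_ [_ [_ [_ [_ [_ [_ cmpl2]]]]]]]]]].
by rewrite -(ba_cap_sub h) -e capA (ba_cap_sub h) cmpl2.
Qed.
End BA.

Section Formal.
Variables (A : nalg) (U : Type) (phi : car A -> brel U).
Hypothesis H : sym_qual_formalism phi.

Lemma f_ba : is_boolean_algebra A.
Proof. by case: H => [[]]. Qed.

Lemma f_mono (x y : car A) u v : Defs.sub x y -> phi x u v -> phi y u v.
Proof.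
case: H => _ [_ [_ [_ [_ [hcup _]]]]].
rewrite /Defs.sub => e h. rewrite -e. apply/hcup. by left.
Qed.

Lemma f_cap x y u v : phi (cap A x y) u v <-> phi x u v /\ phi y u v.
Proof. case: H => _ [_ [_ [_ [hcap _]]]]. exact: hcap. Qed.

Lemma f_univ x u v : phi x u v -> phi (univ A) u v.
Proof. apply: f_mono. case: f_ba => cupC [capC [_ [_ [abs1 [_ [_ [_ [_ [capU _]]]]]]]]].
by rewrite /Defs.sub -{1}(capU x) cupC capC abs1.
Qed.

Lemma f_atom_below : forall (x : car A) u v, phi x u v -> exists b : car A, atom b /\ Defs.sub b x /\ phi b u v.
Proof.
have HB := f_ba.
case: H => _ [_ [hemp [_ [_ [hcup _]]]]].
pose below (x : car A) := [pred y : car A | cup A y x == x].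
suff: forall n (x : car A) u v, #|below x| < n -> phi x u v -> exists b, atom b /\ Defs.sub b x /\ phi b u v.
  move=> h x u v; exact: (h _ x u v (ltnSn _)).
elim=> [//|n IH] x u v hn hx.
case: (classic (atom x)) => [ax|nax].
  exists x; split=> //; split=> //; exact: ba_cupid.
have [ex|[z [sz [nz nzx]]]] : x = emp A \/ exists z : car A, Defs.sub z x /\ z <> emp A /\ z <> x.
  apply: NNPP => c; apply: nax; split.
    by move=> e; apply: c; left.
  move=> z sz; apply: NNPP => c2; apply: c; right; exists z; split=> //.
  split=> e; apply: c2; by [left|right].
  by rewrite ex in hx; case: (hemp u v) => /(_ hx).
have below_lt : forall w, Defs.sub w x -> w <> x -> #|below w| < #|below x|.
  move=> w sw nw; apply: proper_card; apply/properP; split.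
    apply/subsetP => y; rewrite !inE => /eqP h; apply/eqP.
    exact: (ba_sub_trans HB h sw).
  exists x; rewrite !inE; first by apply/eqP; apply: ba_cupid.
  apply/negP => /eqP h; apply: nw; exact: (ba_antisym HB sw h).
have := ba_split HB sz => ex.
rewrite ex in hx; case/hcup: hx => hx.
  have [b [ab [sb pb]]] := IH z u v (leq_trans (below_lt z sz nzx) hn) hx.
  exists b; do 2 split=> //; exact: (ba_sub_trans HB sb sz).
have sw := ba_sub_capl HB x (neg A z).
have nw : cap A x (neg A z) <> x by move=> e; apply: nz; exact: (ba_noncomp HB sz e).
have [b [ab [sb pb]]] := IH _ u v (leq_trans (below_lt _ sw nw) hn) hx.
exists b; do 2 split=> //; exact: (ba_sub_trans HB sb sw).
Qed.
End Formal.

Theorem mainTheorem3 (m : nat) (A : 'I_m -> nalg) (U : Type)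
  (phis : forall i : 'I_m, car (A i) -> brel U)
  (Rp : brel U)
  (P : forall i j : 'I_m, car (A i) -> car (A j)) :
  0 < m ->
  (forall i, sym_qual_formalism (phis i)) ->
  req Rp (rinv Rp) ->
  (forall i j : 'I_m, i <> j -> projection_operator (@P i j)) ->
  (forall (i j : 'I_m) (b : car (A i)), i <> j -> atom b ->
     rsub (rcap (rcap (phis i b) (phis j (univ (A j)))) Rp) (phis j (@P i j b))) ->
  sequential_formalism P (product_interp phis Rp).
Proof.
move=> m0 Hf Hsym Hproj Hat.
pose i0 : 'I_m := Ordinal m0.
have Pmono : forall i j (x y : car (A i)), i <> j -> Defs.sub x y -> Defs.sub (P i j x) (P i j y).
  move=> i j x y ij; rewrite /Defs.sub => e.
  by case: (Hproj i j ij) => hc _; rewrite -hc e.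
split; first by move=> i; case: (Hf i).
split; first exact: Hproj.
split; first by case: (Hf i0) => _ [].
split.
  have step : forall R R', proj_step P R R' -> req (product_interp phis Rp R') (product_interp phis Rp R).
    move=> R R' [i [j [ij [ej ek]]]] x y; rewrite /product_interp; split.
      move=> [h hr]; split=> // k.
      case: (eqVneq k j) => [->|kj]; last by rewrite -ek; [apply: h|apply/eqP].
      by have := h j; rewrite ej => /(f_cap (Hf j)) [].
    move=> [h hr]; split=> // k.
    case: (eqVneq k j) => [->|kj]; last by rewrite ek; [apply: h|apply/eqP].
    rewrite ej; apply/(f_cap (Hf j)); split; first exact: h.
    have [b [ab [sb pb]]] := f_atom_below (Hf i) (h i).
    apply: (f_mono (Hf j) (Pmono _ _ _ _ ij sb)).
    apply: (Hat i j b ij ab); split=> //; split=> //.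
    exact: (f_univ (Hf j) (h j)).
  move=> R R' [hc _]; elim: hc => [a b s|a|a b c _ h1 _ h2].
  - exact: step.
  - by [].
  - move=> x y; split=> h; [apply/h1/h2 | apply/h2/h1] => //.
split.
  move=> R x y; rewrite /product_interp /rinv /mconv; split.
    move=> [h hr]; split; last by apply/Hsym.
    move=> i; have := h i; case: (Hf i) => _ [_ [_ [hc _]]]; by move/hc.
  move=> [h hr]; split; last by apply/Hsym.
  move=> i; case: (Hf i) => _ [_ [_ [hc _]]]; by apply/hc.
split.
  move=> x y; rewrite /product_interp /mempty /rempty; split=> // [[h _]].
  have := h i0; case: (Hf i0) => _ [_ [he _]]; by move/he.
split.
  move=> R R' x z [[y [[h1 r1] [h2 r2]]] [hu ru]]; split=> // i.
  case: (Hf i) => _ [_ [_ [_ [_ [_ hc]]]]]; apply: hc; split; last exact: hu.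
  by exists y.
split.
  move=> R R' x y; rewrite /product_interp /mcap; split.
    move=> [h r]; do 2 split=> //; move=> i; by have /(f_cap (Hf i)) [] := h i.
  move=> [[h1 r] [h2 _]]; split=> // i; apply/(f_cap (Hf i)); by split.
move=> R x y; split.
  move=> [h r].
  have ex : forall i, exists b : car (A i), atom b /\ Defs.sub b (R i) /\ phis i b x y.
    move=> i; exact: (f_atom_below (Hf i) (h i)).
  pose B : mrel A := fun i => proj1_sig (constructive_indefinite_description _ (ex i)).
  exists B; split; [|split].
  - move=> i; rewrite /B; case: (constructive_indefinite_description _ _) => b /= [? _]; done.
  - move=> i; rewrite /B; case: (constructive_indefinite_description _ _) => b /= [_ [? _]]; done.
  - split=> // i; rewrite /B; case: (constructive_indefinite_description _ _) => b /= [_ [_ ?]]; done.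
move=> [B [_ [sB [hB r]]]]; split=> // i.
exact: (f_mono (Hf i) (sB i) (hB i)).
Qed.
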